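(* Let $f:\mathbb{Z}^n\to\mathbb{R}\cup\{+\infty\}$ be an M-convex function. Let $y\in\operatorname{dom} f$ with $\phi(y)<0$, and let $i,j\in N$ be distinct with $f'(y;i,j)=\phi(y)$. Then $\phi(y+\chi_i-\chi_j)\ge\phi(y)$. Moreover, for all distinct $h,k\in N$ we have $f'(y+\chi_i-\chi_j;h,k)\ge\phi(y)$, and if equality holds then $f'(y+\chi_i-\chi_j;h,k)=\phi(y+\chi_i-\chi_j)$, i.e. $+\chi_h-\chi_k$ is a steepest descent direction at $y+\chi_i-\chi_j$.
   Context: $N=\{1,\dots,n\}$; $\chi_i\in\{0,1\}^n$ is the $i$-th unit vector. For $f:\mathbb{Z}^n\to\mathbb{R}\cup\{+\infty\}$, $\operatorname{dom} f=\{x\in\mathbb{Z}^n: f(x)<+\infty\}$. $f$ is M-convex if $\operatorname{dom} f\neq\emptyset$ and for all $x,y\in\operatorname{dom} f$ and every $i$ with $x(i)>y(i)$ there is $j$ with $x(j)<y(j)$ such that $f(x)+f(y)\ge f(x-\chi_i+\chi_j)+f(y+\chi_i-\chi_j)$. For $x\in\operatorname{dom} f$ and $i,j\in N$, $f'(x;i,j)=f(x+\chi_i-\chi_j)-f(x)$ (possibly $+\infty$; $f'(x;i,i)=0$), and $\phi(x)=\min_{i,j\in N}f'(x;i,j)$. A direction $+\chi_h-\chi_k$ is a steepest descent direction at $x$ if $f'(x;h,k)=\phi(x)$. *)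

(* Defs.v *)
From HB Require Import structures.
From mathcomp Require Import all_boot all_order all_algebra.
From mathcomp Require Import reals constructive_ereal.
Set Implicit Arguments. Unset Strict Implicit. Unset Printing Implicit Defensive.
Import Order.TTheory GRing.Theory Num.Theory.
Local Open Scope ring_scope.
Local Open Scope ereal_scope.

Definition chi (n : nat) (i : 'I_n) : 'I_n -> int := fun k => (k == i)%:Z.

Definition mv (n : nat) (x : 'I_n -> int) (i j : 'I_n) : 'I_n -> int :=
  fun k => (x k + chi i k - chi j k)%R.

(* f : Z^n -> R \cup {+oo}, modelled as f : Z^n -> \bar R never equal to -oo *)
Definition no_minf (R : realType) (n : nat) (f : ('I_n -> int) -> \bar R) :=
  forall x, f x != -oo.

Definition in_dom (R : realType) (n : nat) (f : ('I_n -> int) -> \bar R) x :=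
  f x < +oo.

Definition Mconvex (R : realType) (n : nat) (f : ('I_n -> int) -> \bar R) :=
  (exists x, in_dom f x) /\
  forall x y, in_dom f x -> in_dom f y ->
    forall i, (y i < x i)%R ->
      exists j, (x j < y j)%R /\
        f (mv x j i) + f (mv y i j) <= f x + f y.

Definition fder (R : realType) (n : nat) (f : ('I_n -> int) -> \bar R) x (i j : 'I_n) :=
  f (mv x i j) - f x.

Definition phi (R : realType) (n : nat) (f : ('I_n -> int) -> \bar R) x :=
  \big[Order.min/+oo]_(i < n) \big[Order.min/+oo]_(j < n) fder f x i j.

(* Main.v *)
Require Import Defs.
From HB Require Import structures.
From mathcomp Require Import all_boot all_order all_algebra.
From mathcomp Require Import reals constructive_ereal.
From mathcomp Require Import ring lra zify.
From Stdlib Require Import FunctionalExtensionality.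
Import Order.TTheory GRing.Theory Num.Theory.
Local Open Scope ring_scope.
Local Open Scope ereal_scope.

Lemma bigmin_le2 (R : realType) (n : nat) (F : 'I_n -> 'I_n -> \bar R) a c :
  \big[Order.min/+oo]_(i < n) \big[Order.min/+oo]_(j < n) F i j <= F a c.
Proof.
rewrite (bigD1 a) //= ge_min; apply/orP; left.
by rewrite (bigD1 c) //= ge_min lexx.
Qed.

Lemma le_bigmin2 (R : realType) (n : nat) (F : 'I_n -> 'I_n -> \bar R) p :
  (forall a c, p <= F a c) ->
  p <= \big[Order.min/+oo]_(i < n) \big[Order.min/+oo]_(j < n) F i j.
Proof.
move=> H; apply: (big_ind (fun x => p <= x)) => [|x y Hx Hy|a _].
- exact: leey.
- by rewrite le_min Hx Hy.
apply: (big_ind (fun x => p <= x)) => [|x y Hx Hy|c _] //.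
- exact: leey.
- by rewrite le_min Hx Hy.
Qed.

Lemma mv_ext (n : nat) (x y : 'I_n -> int) :
  (forall l, x l = y l) -> x = y.
Proof. by move=> H; apply: functional_extensionality. Qed.

Lemma phi_le (R : realType) (n : nat) (f : ('I_n -> int) -> \bar R) x a c :
  phi f x <= fder f x a c.
Proof. exact: bigmin_le2. Qed.

Theorem mainTheorem1 (R : realType) (n : nat) (f : ('I_n -> int) -> \bar R)
  (hf : no_minf f) (hM : Mconvex f) (y : 'I_n -> int) (hy : in_dom f y)
  (hneg : phi f y < 0) (i j : 'I_n) (hij : i != j)
  (hsteep : fder f y i j = phi f y) :
  phi f y <= phi f (mv y i j) /\
  (forall h k : 'I_n, h != k ->
     phi f y <= fder f (mv y i j) h k /\
     (fder f (mv y i j) h k = phi f y ->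
        fder f (mv y i j) h k = phi f (mv y i j))).
Proof.
have [r Hr] : exists r, f y = r%:E.
  move: hy (hf y); rewrite /in_dom; case: (f y) => [r||] //= _ _; by exists r.
have [s Hs] : exists s, f (mv y i j) = s%:E.
  move: hneg (hf (mv y i j)); rewrite -hsteep /fder Hr.
  case: (f (mv y i j)) => [s||] //= _ _; by exists s.
have Hphi : phi f y = (s - r)%:E by rewrite -hsteep /fder Hs Hr.
have hq : (s - r < 0)%R by move: hneg; rewrite Hphi lte_fin.
have A : forall a c, f (mv y a c) = +oo \/
   exists s', f (mv y a c) = s'%:E /\ (s <= s')%R.
  move=> a c; have := @bigmin_le2 R n (fder f y) a c.
  rewrite -/(phi f y) Hphi /fder Hr.
  case: (f (mv y a c)) (hf (mv y a c)) => [s'||] //= _; last by left.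
  rewrite lee_fin => H; right; exists s'; split => //; lra.
have K : forall h k, phi f y <= fder f (mv y i j) h k.
  move=> h k; rewrite Hphi /fder Hs.
  case Hz: (f (mv (mv y i j) h k)) (hf (mv (mv y i j) h k)) => [t||] //= _;
    last exact: leey.
  rewrite lee_fin.
  suff : (2 * s - r <= t)%R by lra.
  case: (eqVneq i k) => [Eik|hik].
    have Ez : mv (mv y i j) h k = mv y h j.
      by apply: mv_ext => l; rewrite -Eik /mv /chi; ring.
    rewrite Ez in Hz.
    case: (A h j) => [H|[s' [H1 H2]]]; first by rewrite H in Hz.
    rewrite H1 in Hz; case: Hz => Hst; lra.
  have yz : (y i < mv (mv y i j) h k i)%R.
    rewrite /mv /chi eqxx (negbTE hij) eq_sym (negbTE hik).
    by case: (i == h) => /=; lia.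
  have zdom : in_dom f (mv (mv y i j) h k) by rewrite /in_dom Hz ltry.
  have [b [Hb Hex]] := hM.2 _ _ zdom hy i yz.
  have Hbjk : (b == j) || (b == k).
    move: Hb; rewrite /mv /chi.
    by case: (b == j); case: (b == k); case: (b == i); case: (b == h) => //= H; lia.
  have [c Ec] : exists c, mv (mv (mv y i j) h k) b i = mv y h c.
    case/orP: Hbjk => /eqP ->.
      by exists k; apply: mv_ext => l; rewrite /mv /chi; ring.
    by exists j; apply: mv_ext => l; rewrite /mv /chi; ring.
  rewrite Ec Hz Hr in Hex.
  case: (A h c) => [H|[s1 [H1 H2]]].
    move: Hex; rewrite H; case: (A i b) => [H'|[s2 [H3 H4]]]; rewrite ?H' ?H3 //=.
  rewrite H1 in Hex.
  case: (A i b) => [H'|[s2 [H3 H4]]]; rewrite ?H' ?H3 //= in Hex.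
  move: Hex; rewrite lee_fin => Hex; lra.
split; first by apply: (@le_bigmin2 R n (fder f (mv y i j))).
move=> h k _; split; first exact: K.
move=> Heq; apply/eqP; rewrite eq_le; apply/andP; split.
  by rewrite Heq; apply: (@le_bigmin2 R n (fder f (mv y i j))).
exact: phi_le.
Qed.
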